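(* Let $k\ge1$, $1\le m\le d$, $p\in[1,\infty]$, and let $v$ be an $\mathbb{R}^k$-valued $m$-vector in $\mathbb{R}^d$. Then \[ |v|_{\mathrm{mass},p}=\inf\Big\{\sum_{i=1}^l\|z_i\|_p\,|v_i|:\ v=\sum_{i=1}^lz_i\otimes v_i,\ z_i\in\mathbb{R}^k,\ v_i\text{ simple }m\text{-vectors in }\mathbb{R}^d\Big\}. \]
   Context: An $\mathbb{R}^k$-valued $m$-vector is $v=\sum_iv_i e_i$ with $v_i\in\Lambda_m(\mathbb{R}^d)$; an $(\mathbb{R}^k)^*$-valued $m$-covector is $w=\sum_iw_ie_i^*$ with $w_i\in\Lambda^m(\mathbb{R}^d)$, paired by $\langle w,v\rangle=\sum_i\langle w_i,v_i\rangle$. With $q$ conjugate to $p$ and $\|\cdot\|_p,\|\cdot\|_q$ the $\ell^p,\ell^q$ norms on $\mathbb{R}^k$: $|w|_{\mathrm{com},p}:=\sup\{\|(\langle w_1,\tau\rangle,\dots,\langle w_k,\tau\rangle)\|_q:\tau\text{ simple }m\text{-vector},|\tau|\le1\}$ and $|v|_{\mathrm{mass},p}:=\sup\{\langle w,v\rangle:|w|_{\mathrm{com},p}\le1\}$. $|\cdot|$ is the Euclidean norm on $\Lambda_m(\mathbb{R}^d)$. *)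

(* Defs.v *)
From HB Require Import structures.
From mathcomp Require Import all_boot all_order all_algebra.
From mathcomp Require Import all_classical all_reals all_analysis.
Set Implicit Arguments. Unset Strict Implicit. Unset Printing Implicit Defensive.
Import Order.TTheory GRing.Theory Num.Theory.
Local Open Scope ring_scope.
Local Open Scope classical_set_scope.

(* Strictly increasing multi-indices 1 <= i_1 < ... < i_m <= d, indexing the
   standard (orthonormal) basis e_I of Lambda_m(R^d) and dual basis of Lambda^m. *)
Definition incr (m d : nat) :=
  {f : {ffun 'I_m -> 'I_d} | [forall i : 'I_m, forall j : 'I_m, (i < j)%N ==> (f i < f j)%N]}.

(* m-vectors (and m-covectors, via the dual basis) in R^d, by coordinates. *)
Definition mvec (R : realType) (m d : nat) := {ffun incr m d -> R}.

Definition mpair (R : realType) m d (w v : mvec R m d) : R :=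
  \sum_(I : incr m d) w I * v I.

Definition mnorm (R : realType) m d (v : mvec R m d) : R :=
  Num.sqrt (\sum_(I : incr m d) v I ^+ 2).

(* Wedge product u_1 /\ ... /\ u_m of the rows of M : its e_I coordinate is
   the m x m minor of M on the columns I. *)
Definition wedge (R : realType) m d (M : 'M[R]_(m, d)) : mvec R m d :=
  [ffun I : incr m d => \det (\matrix_(a < m, b < m) M a (val I b))].

Definition simple_mvec (R : realType) m d (t : mvec R m d) : Prop :=
  exists M : 'M[R]_(m, d), t = wedge M.

Definition lpnorm (R : realType) (p : \bar R) k (z : 'I_k -> R) : R :=
  match p with
  | +oo%E => \big[Num.max/0]_(i < k) `|z i|
  | (r%:E)%E => powR (\sum_(i < k) powR `|z i| r) r^-1
  | -oo%E => 0
  end.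

Definition conj_exp (R : realType) (p : \bar R) : \bar R :=
  match p with
  | +oo%E => 1%:E
  | (r%:E)%E => if r == 1 then +oo%E else (r / (r - 1))%:E
  | -oo%E => -oo%E
  end.

(* R^k-valued m-vectors / (R^k)^*-valued m-covectors: k-tuples of (co)vectors. *)
Definition kmvec (R : realType) k m d := 'I_k -> mvec R m d.

Definition kpair (R : realType) k m d (w v : kmvec R k m d) : R :=
  \sum_(i < k) mpair (w i) (v i).

Definition comass (R : realType) (p : \bar R) k m d (w : kmvec R k m d) : \bar R :=
  ereal_sup [set (lpnorm (conj_exp p) (fun i => mpair (w i) t))%:E
            | t in [set t : mvec R m d | simple_mvec t /\ mnorm t <= 1]].

Definition mass (R : realType) (p : \bar R) k m d (v : kmvec R k m d) : \bar R :=
  ereal_sup [set (kpair w v)%:E | w in [set w : kmvec R k m d | (comass p w <= 1%:E)%E]].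

Definition decomp_inf (R : realType) (p : \bar R) k m d (v : kmvec R k m d) : \bar R :=
  ereal_inf [set x : \bar R | exists (l : nat) (z : 'I_l -> 'I_k -> R)
                                     (vs : 'I_l -> mvec R m d),
     (forall i, simple_mvec (vs i)) /\
     (forall j : 'I_k, v j = \sum_(i < l) z i j *: vs i) /\
     x = (\sum_(i < l) lpnorm p (z i) * mnorm (vs i))%:E].

(* Main.v *)
Require Import Defs.
From mathcomp Require Import all_boot all_order all_algebra.
From mathcomp Require Import all_classical all_reals all_analysis.
From mathcomp Require Import ring lra.
Import Order.TTheory GRing.Theory Num.Theory.

Section HB.
Unset Implicit Arguments.
Local Open Scope ring_scope.
Local Open Scope classical_set_scope.
Context {R : realType} {T : finType}.

Definition Fl (a x : T -> R) := \sum_t a t * x t.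

Lemma Fl_lin (a x y : T -> R) (c d : R) :
  Fl a (fun t => c * x t + d * y t) = c * Fl a x + d * Fl a y.
Proof.
rewrite /Fl !mulr_sumr -big_split /=; apply: eq_bigr => t _; ring.
Qed.

Section Sub.
Variable (p : (T -> R) -> R).
Hypothesis padd : forall x y, p (fun t => x t + y t) <= p x + p y.
Hypothesis phom : forall l x, 0 < l -> p (fun t => l * x t) <= l * p x.

Lemma p0 : p (fun _ => 0) = 0.
Proof.
have h1 := phom _ (fun _ => 0) (ltr0Sn R 1).
have h2 := phom (2^-1) (fun _ => 0) (ltac:(by rewrite invr_gt0)).
rewrite (_ : (fun _ => _) = (fun _ => 0)) in h1; last by apply: funext => t; rewrite mulr0.
rewrite (_ : (fun _ => _) = (fun _ => 0)) in h2; last by apply: funext => t; rewrite mulr0.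
move: h1 h2; set a := p _ => h1 h2.
apply/le_anti/andP; split; lra.
Qed.

Lemma phomE l x : 0 < l -> p (fun t => l * x t) = l * p x.
Proof.
move=> l0; have il0 : 0 < l^-1 by rewrite invr_gt0.
apply/le_anti/andP; split; first exact: phom.
have := phom l^-1 (fun t => l * x t) il0.
rewrite (_ : (fun t => _) = x); last by apply: funext => t; rewrite mulrA mulVf ?gt_eqF // mul1r.
move=> h; rewrite -(ler_pM2l il0) mulrA mulVf ?gt_eqF // mul1r //.
Qed.

Lemma hb_seq (s : seq T) : exists a, forall x,
  (forall t, t \notin s -> x t = 0) -> Fl a x <= p x.
Proof.
elim: s => [|t0 s [a Ha]].
  exists (fun _ => 0) => x hx.
  have -> : x = fun _ => 0 by apply: funext => t; exact: hx.
  by rewrite p0 /Fl big1 // => t _; rewrite mulr0.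
pose W (w : T -> R) := (forall t, t \notin s -> w t = 0) /\ w t0 = 0.
pose e := fun t : T => ((t == t0)%:R : R).
have key : forall w w', W w -> W w' ->
    Fl a w - p (fun t => w t - e t) <= p (fun t => w' t + e t) - Fl a w'.
  move=> w w' [Ws _] [W's _].
  have h1 : Fl a (fun t => 1 * w t + 1 * w' t) <= p (fun t => w t + w' t).
    rewrite (_ : (fun t => _) = (fun t => w t + w' t)); last by apply: funext => t; rewrite !mul1r.
    apply: Ha => t ht; rewrite Ws ?W's ?addr0 //.
  have h2 := padd (fun t => w t - e t) (fun t => w' t + e t).
  rewrite (_ : (fun t => _) = (fun t => w t + w' t)) in h2; last by apply: funext => t; ring.
  rewrite Fl_lin !mul1r in h1; lra.
pose L := [set Fl a w - p (fun t => w t - e t) | w in W].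
have W0 : W (fun _ => 0) by [].
have Lne : L !=set0 by exists (Fl a (fun _ => 0) - p (fun t => 0 - e t)); exists (fun _ => 0).
have Lub : ubound L (p (fun t => 0 + e t) - Fl a (fun _ => 0)).
  by move=> _ [w Ww <-]; apply: key.
have Lhas : has_ubound L by exists (p (fun t => 0 + e t) - Fl a (fun _ => 0)).
pose c := sup L.
have cL : forall w, W w -> Fl a w - p (fun t => w t - e t) <= c.
  by move=> w Ww; apply: ub_le_sup => //; exists w.
have cU : forall w, W w -> c <= p (fun t => w t + e t) - Fl a w.
  by move=> w Ww; apply: ge_sup => // _ [w' Ww' <-]; apply: key.
exists (fun t => if t == t0 then c else a t) => x hx.
pose y := fun t => if t == t0 then 0 else x t.
have Wy : W y.
  split; last by rewrite /y eqxx.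
  move=> t ht; rewrite /y; case: eqP => // tt0; apply: hx.
  by rewrite in_cons negb_or ht andbT; apply/eqP.
have hF : Fl (fun t => if t == t0 then c else a t) x = Fl a y + c * x t0.
  rewrite /Fl (bigD1 t0) //= [X in _ = X + _](bigD1 t0) //= /y !eqxx mulr0 add0r addrC.
  congr (_ + _); apply: eq_bigr => t /negbTE ->; by [].
have xe : forall sc, sc = x t0 -> x = (fun t => y t + sc * e t).
  move=> sc ->; apply: funext => t; rewrite /y /e; case: eqP => [->|]; rewrite ?mulr1 ?mulr0 ?add0r ?addr0 //.
rewrite hF.
have [sc0|scne] := eqVneq (x t0) 0.
  rewrite sc0 mulr0 addr0 (xe 0) // .
  rewrite (_ : (fun t => _) = y); last by apply: funext => t; rewrite mul0r addr0.
  by apply: Ha => t ht; case: Wy => + _; apply.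
have [scp|scn] := ltrP 0 (x t0).
  set sc := x t0 in scp scne xe *.
  have Wys : W (fun t => sc^-1 * y t).
    by case: Wy => h1 h2; split; [move=> t ht; rewrite h1 ?mulr0 | rewrite h2 mulr0].
  have := cU _ Wys.
  have -> : p (fun t => sc^-1 * y t + e t) = sc^-1 * p x.
    rewrite (xe sc) // -phomE ?invr_gt0 //; congr p; apply: funext => t.
    by rewrite mulrDr mulrA mulVf ?mul1r.
  have -> : Fl a (fun t => sc^-1 * y t) = sc^-1 * Fl a y.
    by rewrite (_ : (fun t => _) = (fun t => sc^-1 * y t + 0 * y t)) ?Fl_lin ?mul0r ?addr0 //; apply: funext => t; rewrite mul0r addr0.
  move=> h.
  have : sc * c <= sc * (sc^-1 * p x - sc^-1 * Fl a y) by rewrite ler_pM2l.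
  rewrite mulrBr !mulrA mulfV // !mul1r; lra.
have scn' : x t0 < 0 by rewrite lt_neqAle scne scn.
set sc := x t0 in scn scne xe scn' *.
set l := - sc.
have l0 : 0 < l by rewrite oppr_gt0.
have Wys : W (fun t => l^-1 * y t).
  by case: Wy => h1 h2; split; [move=> t ht; rewrite h1 ?mulr0 | rewrite h2 mulr0].
have := cL _ Wys.
have -> : p (fun t => l^-1 * y t - e t) = l^-1 * p x.
  rewrite (xe sc) // -phomE ?invr_gt0 //; congr p; apply: funext => t.
  rewrite /l; field; done.
have -> : Fl a (fun t => l^-1 * y t) = l^-1 * Fl a y.
  by rewrite (_ : (fun t => _) = (fun t => l^-1 * y t + 0 * y t)) ?Fl_lin ?mul0r ?addr0 //; apply: funext => t; rewrite mul0r addr0.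
move=> h.
have : l * (l^-1 * Fl a y - l^-1 * p x) <= l * c by rewrite ler_pM2l.
rewrite mulrBr !mulrA mulfV ?gt_eqF // !mul1r /l; lra.
Qed.

Lemma hb_all : exists a, forall x, Fl a x <= p x.
Proof.
have [a Ha] := hb_seq (enum T); exists a => x; apply: Ha => t.
by rewrite mem_enum.
Qed.

End Sub.

Lemma hahn_banach (p : (T -> R) -> R)
  (padd : forall x y, p (fun t => x t + y t) <= p x + p y)
  (phom : forall l x, 0 < l -> p (fun t => l * x t) <= l * p x)
  (v : T -> R) : exists a, (forall x, Fl a x <= p x) /\ Fl a v = p v.
Proof.
have P0 := @p0 p phom.
have phomE' := @phomE p phom.
pose S x := [set p (fun t => x t + s * v t) - s * p v | s in [set s : R | 0 <= s]].
pose q x := inf (S x).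
have psv : forall s, 0 <= s -> p (fun t => s * v t) = s * p v.
  move=> s; rewrite le_eqVlt => /orP [/eqP <-|s0]; last exact: phomE'.
  rewrite mul0r -[RHS]P0; congr p; apply: funext => t; by rewrite mul0r.
have Sne : forall x, S x !=set0.
  by move=> x; exists (p (fun t => x t + 0 * v t) - 0 * p v); exists 0 => //=; rewrite inE /=.
have Slb : forall x, has_lbound (S x).
  move=> x; exists (- p (fun t => - x t)) => _ [s /= s0 <-].
  have h := padd (fun t => x t + s * v t) (fun t => - x t).
  rewrite (_ : (fun t => _) = (fun t => s * v t)) ?psv // in h; last by apply: funext => t; ring.
  lra.
have q_le : forall x s, 0 <= s -> q x <= p (fun t => x t + s * v t) - s * p v.
  by move=> x s s0; apply: ge_inf => //; exists s.
have q_ge : forall x y, (forall s, 0 <= s -> y <= p (fun t => x t + s * v t) - s * p v) -> y <= q x.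
  by move=> x y h; apply: lb_le_inf => // _ [s /= s0 <-]; apply: h.
have qadd : forall x y, q (fun t => x t + y t) <= q x + q y.
  move=> x y.
  suff : q (fun t => x t + y t) - q y <= q x by lra.
  apply: (q_ge) => s s0.
  suff : q (fun t => x t + y t) - (p (fun t => x t + s * v t) - s * p v) <= q y by lra.
  apply: (q_ge) => s' s'0.
  have h1 := q_le (fun t => x t + y t) (s + s') (addr_ge0 s0 s'0).
  have h2 := padd (fun t => x t + s * v t) (fun t => y t + s' * v t).
  rewrite (_ : (fun t => _) = (fun t => x t + y t + (s + s') * v t)) in h2; last by apply: funext => t; ring.
  lra.
have qhom : forall l x, 0 < l -> q (fun t => l * x t) <= l * q x.
  move=> l x l0; have il0 : 0 < l^-1 by rewrite invr_gt0.
  suff : l^-1 * q (fun t => l * x t) <= q x.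
    by move=> h; rewrite -(ler_pM2l il0) mulrA mulVf ?gt_eqF // mul1r.
  apply: (q_ge) => s s0.
  have h := q_le (fun t => l * x t) (l * s) (mulr_ge0 (ltW l0) s0).
  rewrite [p _](_ : _ = p (fun t => l * (x t + s * v t))) in h; last by congr p; apply: funext => t /=; ring.
  rewrite phomE' // in h.
  rewrite -(ler_pM2l l0) mulrA mulfV ?gt_eqF // mul1r; lra.
have [a Ha] := @hb_all q qadd qhom.
have qp : forall x, q x <= p x.
  move=> x; have := q_le x 0 (lexx _).
  rewrite mul0r subr0 (_ : (fun t => _) = x) //; apply: funext => t; by rewrite mul0r addr0.
exists a; split; first by move=> x; apply: le_trans (Ha x) (qp x).
apply/le_anti/andP; split; first by apply: le_trans (Ha v) (qp v).
have h1 := Ha (fun t => - v t).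
have h2 := q_le (fun t => - v t) 1 ler01.
rewrite [p _](_ : _ = p (fun _ => 0)) in h2; last by congr p; apply: funext => t /=; ring.
rewrite P0 in h2.
have : Fl a (fun t => - v t) = - Fl a v.
  by rewrite /Fl -sumrN; apply: eq_bigr => t _; rewrite mulrN.
lra.
Qed.

End HB.

Section LP.
Set Implicit Arguments.
Local Open Scope ring_scope.
Local Open Scope classical_set_scope.
Context {R : realType}.

Lemma le_bigmax_seq (I : eqType) (r : seq I) (F : I -> R) j :
  j \in r -> F j <= \big[Num.max/0]_(i <- r) F i.
Proof.
elim: r => // i r IH; rewrite in_cons big_cons => /orP [/eqP->|/IH h].
  by rewrite le_max lexx.
by rewrite le_max h orbT.
Qed.

Lemma le_bigmax k (F : 'I_k -> R) j : F j <= \big[Num.max/0]_(i < k) F i.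
Proof. by apply: le_bigmax_seq; rewrite mem_index_enum. Qed.

Lemma bigmax_le k (F : 'I_k -> R) c :
  0 <= c -> (forall i, F i <= c) -> \big[Num.max/0]_(i < k) F i <= c.
Proof.
move=> c0 h; elim/big_ind: _ => // x y hx hy.
by rewrite ge_max hx hy.
Qed.

Lemma bigmax_ge0 k (F : 'I_k -> R) : 0 <= \big[Num.max/0]_(i < k) F i.
Proof. by elim/big_rec: _ => // i y _ hy; rewrite le_max hy orbT. Qed.

Lemma lpnorm_ge0 (p : \bar R) k (z : 'I_k -> R) : 0 <= lpnorm p z.
Proof. case: p => [r| |] //=; [exact: powR_ge0 | exact: bigmax_ge0]. Qed.

Definition goodp (p : \bar R) := (p = +oo%E) \/ exists r, p = r%:E /\ 1 <= r.

Lemma goodp_of (p : \bar R) : (1%:E <= p)%E -> goodp p.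
Proof.
case: p => [r||] //= h; [right; exists r; split => //; by rewrite lee_fin in h | by left].
Qed.

Definition posp (p : \bar R) := (p = +oo%E) \/ exists r, p = r%:E /\ 0 < r.

Lemma goodp_posp p : goodp p -> posp p.
Proof. case=> [->|[r [-> h]]]; [by left | right; exists r; split => //; lra]. Qed.

Lemma goodp_conj p : goodp p -> goodp (conj_exp p).
Proof.
case=> [->|[r [-> h]]] /=; first by right; exists 1; split.
case: eqP => [_|r1]; first by left.
right; exists (r / (r - 1)); split => //.
have r1' : 1 < r by rewrite lt_neqAle h andbT; apply/eqP => e; apply: r1.
rewrite ler_pdivlMr ?subr_gt0 //; lra.
Qed.

Lemma lpnormZ p k (c : R) (z : 'I_k -> R) : posp p ->
  lpnorm p (fun j => c * z j) = `|c| * lpnorm p z.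
Proof.
case=> [->|[r [-> r0]]] /=.
  apply: (big_rec2 (fun y1 y2 => y1 = `|c| * y2)); first by rewrite mulr0.
  by move=> i y1 y2 _ ->; rewrite maxr_pMr // normrM.
under eq_bigr do rewrite normrM powRM //.
have S0 : 0 <= \sum_i `|z i| `^ r by apply: sumr_ge0 => i _; exact: powR_ge0.
rewrite -mulr_sumr powRM ?powR_ge0 //.
by rewrite -powRrM mulfV ?gt_eqF // powRr1.
Qed.

Lemma lpnorm_eq0 p k (z : 'I_k -> R) : posp p -> lpnorm p z = 0 -> forall j, z j = 0.
Proof.
case=> [->|[r [-> r0]]] /= h j.
  by apply/normr0_eq0/le_anti; rewrite normr_ge0 andbT -h le_bigmax.
have /psumr_eq0P h2 := powR_eq0_eq0 h.
have := h2 (fun i _ => powR_ge0 _ _) j isT.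
by move/powR_eq0_eq0/normr0_eq0.
Qed.

Lemma lpnorm0 p k : posp p -> lpnorm p (fun _ : 'I_k => 0) = 0.
Proof.
move=> pp; have := @lpnormZ p k 0 (fun _ => 0) pp.
by rewrite mulr0 normr0 mul0r.
Qed.

Lemma lpnorm1E k (b : 'I_k -> R) : lpnorm 1%:E b = \sum_i `|b i|.
Proof.
have S0 : 0 <= \sum_(i < k) `|b i| `^ 1 by apply: sumr_ge0 => i _; exact: powR_ge0.
rewrite /= invr1 powRr1 //; by apply: eq_bigr => i _; rewrite powRr1.
Qed.

Lemma powR_le1 (S s : R) : 0 < s -> 0 <= S -> powR S s <= 1 -> S <= 1.
Proof.
move=> s0 S0 h; rewrite leNgt; apply/negP => S1.
have := gt0_ltr_powR s0 (x:=1) (y:=S); rewrite powR1 !nnegrE ler01 S0 => /(_ isT isT S1) h2; lra.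
Qed.

Lemma holder_norm p k (z b : 'I_k -> R) : goodp p ->
  lpnorm p z <= 1 -> lpnorm (conj_exp p) b <= 1 ->
  \sum_i `|z i| * `|b i| <= 1.
Proof.
case=> [->|[r [-> r1]]].
  rewrite [conj_exp _]/= lpnorm1E /= => hz hb; apply: le_trans hb.
  apply: ler_sum => i _; rewrite -[X in _ <= X]mul1r; apply: ler_wpM2r => //.
  exact: le_trans (le_bigmax _ i) hz.
rewrite [conj_exp _]/=.
case: eqP => [->|rn1].
  rewrite lpnorm1E /= => hz hb; apply: le_trans hz.
  apply: ler_sum => i _; rewrite -[X in _ <= X]mulr1; apply: ler_wpM2l => //.
  exact: le_trans (le_bigmax _ i) hb.
rewrite /=.
have r1' : 1 < r by rewrite lt_neqAle r1 andbT; apply/eqP => e; apply: rn1.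
set q := r / (r - 1).
have q0 : 0 < q by rewrite divr_gt0 // ?subr_gt0; lra.
have rq : r^-1 + q^-1 = 1 by rewrite /q invf_div; field; lra.
move=> hz hb.
have r0' : 0 < r by apply: lt_le_trans ltr01 r1.
have r0 : 0 < r^-1 by rewrite invr_gt0.
have qi0 : 0 < q^-1 by rewrite invr_gt0.
have Sz := powR_le1 _ _ r0 (sumr_ge0 _ (fun i _ => powR_ge0 _ _)) hz.
have Sb := powR_le1 _ _ qi0 (sumr_ge0 _ (fun i _ => powR_ge0 _ _)) hb.
apply: (@le_trans _ _ (\sum_i (`|z i| `^ r / r + `|b i| `^ q / q))).
  apply: ler_sum => i _; apply: conjugate_powR => //.
rewrite big_split /= -!mulr_suml.
rewrite -rq lerD // -[X in _ <= X]mul1r ler_pM2r //.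
Qed.

Lemma holder p k (z b : 'I_k -> R) : goodp p ->
  \sum_i z i * b i <= lpnorm p z * lpnorm (conj_exp p) b.
Proof.
move=> gp; have pp := goodp_posp gp; have qq := goodp_posp (goodp_conj gp).
set A := lpnorm p z; set B := lpnorm (conj_exp p) b.
have [A0|Ane] := eqVneq A 0.
  have := @lpnorm_eq0 p k z pp A0 => h; rewrite A0 mul0r big1 // => i _; by rewrite h mul0r.
have [B0|Bne] := eqVneq B 0.
  have := @lpnorm_eq0 _ k b qq B0 => h; rewrite B0 mulr0 big1 // => i _; by rewrite h mulr0.
have Ap : 0 < A by rewrite lt_neqAle eq_sym Ane lpnorm_ge0.
have Bp : 0 < B by rewrite lt_neqAle eq_sym Bne lpnorm_ge0.
have h := holder_norm (fun i => A^-1 * z i) (fun i => B^-1 * b i) gp.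
have iA : 0 <= A^-1 by rewrite invr_ge0 ltW.
have iB : 0 <= B^-1 by rewrite invr_ge0 ltW.
rewrite !lpnormZ // (ger0_norm iA) (ger0_norm iB) -/A -/B !mulVf // in h.
have {}h := h (lexx _) (lexx _).
apply: le_trans (ler_norm _) _; apply: le_trans (ler_norm_sum _ _ _) _.
have -> : \sum_i `|z i * b i| = A * B * \sum_i `|A^-1 * z i| * `|B^-1 * b i|.
  rewrite mulr_sumr; apply: eq_bigr => i _.
  rewrite !normrM (ger0_norm iA) (ger0_norm iB); field; by rewrite Ane Bne.
by rewrite -[X in _ <= X]mulr1 ler_pM2l // mulr_gt0.
Qed.

Lemma dual_attain p k (b : 'I_k -> R) : goodp p ->
  (forall z : 'I_k -> R, \sum_i z i * b i <= lpnorm p z) ->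
  lpnorm (conj_exp p) b <= 1.
Proof.
case=> [->|[r [-> r1]]] h.
  rewrite [conj_exp _]/= lpnorm1E.
  have := h (fun i => Num.sg (b i)).
  under eq_bigr do rewrite -normrEsg.
  move=> h1; apply: le_trans h1 _ => /=; apply: bigmax_le => // i.
  by rewrite normr_sg; case: (_ != 0).
rewrite [conj_exp _]/=; case: eqP => [r1e|rn1].
  subst r; rewrite /=; apply: bigmax_le => // j.
  pose d s := fun i : 'I_k => ((i == j)%:R * s : R).
  have hd : forall s, \sum_i d s i * b i = s * b j.
    move=> s; rewrite (bigD1 j) //= big1 => [|i /negbTE hi]; rewrite /d ?hi ?eqxx ?mul1r ?addr0 ?mul0r //.
  have ld : forall s, lpnorm 1%:E (d s) = `|s|.
    move=> s; rewrite lpnorm1E (bigD1 j) //= big1 => [|i /negbTE hi]; by rewrite /d ?hi ?eqxx ?mul1r ?addr0 ?mul0r ?normr0.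
  have := h (d 1); have := h (d (-1)); rewrite !hd !ld normrN normr1.
  move=> h1 h2; rewrite ler_norml; apply/andP; split; lra.
have r1' : 1 < r by rewrite lt_neqAle r1 andbT; apply/eqP => e; apply: rn1.
set q := r / (r - 1).
have q1 : 1 < q by rewrite /q ltr_pdivlMr ?subr_gt0 //; lra.
have q0 : 0 < q by apply: lt_trans ltr01 q1.
have qr : (q - 1) * r = q by rewrite /q; field; rewrite subr_eq0; apply/eqP => e; apply: rn1.
rewrite /=.
set Sq := \sum_i `|b i| `^ q.
pose z := fun i => Num.sg (b i) * `|b i| `^ (q - 1).
have hz1 : \sum_i z i * b i = Sq.
  by apply: eq_bigr => i _; rewrite /z mulrAC -normrEsg mulr_powRB1.
have hz2 : lpnorm r%:E z = Sq `^ r^-1.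
  rewrite /=; congr (_ `^ _); apply: eq_bigr => i _.
  rewrite /z normrM normr_sg ger0_norm ?powR_ge0 //.
  have [->|bn] := eqVneq (b i) 0.
    have q10 : q - 1 != 0 by rewrite subr_eq0 gt_eqF.
    rewrite /= mul0r normr0 !powR0 // ?gt_eqF //; exact: lt_trans ltr01 r1'.
  by rewrite /= mulr1n mul1r -powRrM qr.
have := h z; rewrite hz1 hz2 => hS.
have Sq0 : 0 <= Sq by apply: sumr_ge0 => i _; exact: powR_ge0.
have Sle : Sq <= 1.
  rewrite leNgt; apply/negP => S1.
  have Sp : 0 < Sq by apply: lt_trans ltr01 S1.
  have : ln Sq <= ln (Sq `^ r^-1) by rewrite ler_ln // posrE powR_gt0.
  rewrite ln_powR.
  have := ln_gt0 S1.
  have r0 : 0 < r by apply: lt_le_trans ltr01 r1.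
  have : r^-1 < 1 by rewrite invf_lt1.
  move: (ln Sq) (r^-1) => a c ha hc hac.
  have : c * a < 1 * a by rewrite ltr_pM2r.
  lra.
have := @ge0_ler_powR _ q^-1 (ltW (ltac:(by rewrite invr_gt0) : 0 < q^-1)) Sq 1.
rewrite powR1 !nnegrE Sq0 ler01; apply => //.
Qed.

End LP.

Section Geo.
Set Implicit Arguments.
Local Open Scope ring_scope.
Context {R : realType} {m d : nat}.
Hypothesis hm : (1 <= m)%N.

Lemma incr_lt (I : incr m d) (a b : 'I_m) : (a < b)%N -> (val I a < val I b)%N.
Proof.
case: I => f /= /forallP H ab.
by have /forallP/(_ b)/implyP := H a; apply.
Qed.

Lemma incr_inj (I : incr m d) : injective (val I).
Proof.
move=> a b e; apply/eqP; case: (ltngtP a b) => [ab|ab|] //.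
  by have := incr_lt I _ _ ab; rewrite e ltnn.
by have := incr_lt I _ _ ab; rewrite e ltnn.
by move/val_inj ->.
Qed.

Definition sq (I : incr m d) := [seq (val (val I a) : nat) | a <- enum 'I_m].

Lemma sq_sorted I : sorted ltn (sq I).
Proof.
rewrite /sq sorted_map.
have : sorted (relpre val ltn) (enum 'I_m) by rewrite -sorted_map val_enum_ord iota_ltn_sorted.
by apply: sub_sorted => a b /=; apply: incr_lt.
Qed.

Lemma incr_eq (I J : incr m d) :
  (forall a, exists b, val J b = val I a) -> I = J.
Proof.
move=> H.
have uI : uniq (sq I) by apply: (sorted_uniq ltn_trans ltnn); exact: sq_sorted.
have sub : {subset sq I <= sq J}.
  move=> x /mapP [a _ ->]; have [b hb] := H a.
  by apply/mapP; exists b; rewrite ?mem_enum // hb.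
have [_ eqm] := uniq_min_size uI sub (ltac:(by rewrite /sq !size_map)).
have e := irr_sorted_eq ltn_trans ltnn (sq_sorted I) (sq_sorted J) eqm.
apply: val_inj; apply/ffunP => a; apply: val_inj => /=.
have ha : (a < size (enum 'I_m))%N by rewrite size_enum_ord ltn_ord.
have := congr1 (fun s => nth 0%N s a) e; rewrite /sq.
rewrite !(nth_map a) -?enumT ?nth_ord_enum // size_enum_ord ltn_ord.
Qed.

Definition ebasis (I : incr m d) : mvec R m d := [ffun J => (J == I)%:R].

Definition Emx (I : incr m d) : 'M[R]_(m, d) := \matrix_(a, b) ((b == val I a)%:R).

Lemma ebasis_simple I : simple_mvec (ebasis I).
Proof.
exists (Emx I); apply/ffunP => J; rewrite !ffunE.
have [->|JI] := eqVneq J I.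
  rewrite (_ : \matrix_(a, b) _ = 1%:M) ?det1 //.
  apply/matrixP => a b; rewrite !mxE (inj_eq (@incr_inj I)) eq_sym.
  by case: (a == b).
have [a ha] : exists a, forall b, val J b != val I a.
  apply: contrapT => Hn; move/eqP: JI; apply; apply: esym; apply: incr_eq => a.
  apply: contrapT => Hb; apply: Hn; exists a => b; apply/negP => /eqP e.
  by apply: Hb; exists b.
rewrite (expand_det_row _ a) big1 // => b _.
by rewrite !mxE (negbTE (ha b)) mul0r.
Qed.

Lemma simpleZ (c : R) (t : mvec R m d) : simple_mvec t -> simple_mvec (c *: t).
Proof.
case=> M ->.
pose a0 : 'I_m := Ordinal hm.
pose dv : 'rV[R]_m := \row_a (if a == a0 then c else 1).
exists (\matrix_(a, b) (dv 0 a * M a b)); apply/ffunP => J; rewrite /wedge !ffunE.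
have -> : \matrix_(a, b) (\matrix_(a1, b0) (dv 0 a1 * M a1 b0)) a (val J b)
    = diag_mx dv *m \matrix_(a, b) M a (val J b).
  by rewrite mul_diag_mx; apply/matrixP => a b; rewrite !mxE.
rewrite det_mulmx det_diag (bigD1 a0) //= big1 => [|a /negbTE ha]; last by rewrite mxE ha.
by rewrite mxE eqxx mulr1.
Qed.

Lemma mnorm_ge0 (t : mvec R m d) : 0 <= mnorm t.
Proof. exact: sqrtr_ge0. Qed.

Lemma mnorm_eq0 (t : mvec R m d) : mnorm t = 0 -> t = 0.
Proof.
move/eqP; rewrite sqrtr_eq0 => h.
have S0 : \sum_I t I ^+ 2 = 0.
  by apply/le_anti; rewrite h sumr_ge0 // => I _; exact: sqr_ge0.
apply/ffunP => I; rewrite ffunE.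
have := psumr_eq0P (fun I _ => sqr_ge0 (t I)) S0 (i := I) isT.
by move/eqP; rewrite sqrf_eq0 => /eqP.
Qed.

Lemma mnormZ (c : R) (t : mvec R m d) : mnorm (c *: t) = `|c| * mnorm t.
Proof.
rewrite /mnorm (eq_bigr (fun I => c ^+ 2 * t I ^+ 2)); last first.
  by move=> I _; rewrite ffunE exprMn.
by rewrite -mulr_sumr sqrtrM ?sqr_ge0 // sqrtr_sqr.
Qed.

Lemma mpair_sum (w : mvec R m d) l (c : 'I_l -> R) (u : 'I_l -> mvec R m d) :
  mpair w (\sum_(i < l) c i *: u i) = \sum_(i < l) c i * mpair w (u i).
Proof.
rewrite /mpair (eq_bigr (fun I => \sum_(i < l) w I * (c i * u i I))); last first.
  by move=> I _; rewrite sum_ffunE mulr_sumr; apply: eq_bigr => i _; rewrite ffunE.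
rewrite exchange_big /=; apply: eq_bigr => i _; rewrite mulr_sumr.
by apply: eq_bigr => I _; ring.
Qed.

Lemma mpairZ (w : mvec R m d) (c : R) (u : mvec R m d) :
  mpair w (c *: u) = c * mpair w u.
Proof.
rewrite /mpair mulr_sumr; apply: eq_bigr => I _; rewrite ffunE.
have -> : c *: u I = c * u I by []. ring.
Qed.

Lemma mpair0 (w : mvec R m d) : mpair w 0 = 0.
Proof. by rewrite /mpair big1 // => I _; rewrite ffunE mulr0. Qed.

End Geo.

Section Main.
Unset Implicit Arguments.
Local Open Scope ring_scope.
Local Open Scope classical_set_scope.
Variables (R : realType) (k m d : nat) (p : \bar R).
Hypothesis hm : (1 <= m)%N.
Hypothesis hp : (1%:E <= p)%E.

Let gp : goodp p := goodp_of p hp.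
Let pp : posp p := goodp_posp gp.

Definition Dset (v : kmvec R k m d) := [set r : R | exists (l : nat) (z : 'I_l -> 'I_k -> R)
    (vs : 'I_l -> mvec R m d),
     (forall i, simple_mvec (vs i)) /\
     (forall j : 'I_k, v j = \sum_(i < l) z i j *: vs i) /\
     r = \sum_(i < l) lpnorm p (z i) * mnorm (vs i)].

Definition N v := inf (Dset v).

Lemma Dset_ge0 v r : Dset v r -> 0 <= r.
Proof.
case=> l [z [vs [_ [_ ->]]]]; apply: sumr_ge0 => i _.
by apply: mulr_ge0; [exact: lpnorm_ge0 | exact: mnorm_ge0].
Qed.

Lemma Dset_lb v : has_lbound (Dset v).
Proof. by exists 0 => r; apply: Dset_ge0. Qed.

Lemma Dset_ne v : Dset v !=set0.
Proof.
pose T : finType := ('I_k * incr m d)%type.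
pose z := fun (i : 'I_#|T|) (j : 'I_k) =>
  if (enum_val i).1 == j then v j (enum_val i).2 else 0.
pose vs := fun i : 'I_#|T| => (ebasis (enum_val i).2 : mvec R m d).
exists (\sum_(i < #|T|) lpnorm p (z i) * mnorm (vs i)), #|T|, z, vs.
split; first by move=> i; apply: ebasis_simple.
split => // j.
apply/ffunP => J; rewrite sum_ffunE.
rewrite (eq_bigr (fun i => (fun t : T => (if t.1 == j then v j t.2 else 0) * (J == t.2)%:R) (enum_val i))); last first.
  by move=> i _; rewrite ffunE /vs /ebasis ffunE.
rewrite -(big_enum_val (A := xpredT) (fun t : T => (if t.1 == j then v j t.2 else 0) * (J == t.2)%:R)) /= (bigD1 (j, J)) //= !eqxx mulr1 big1 ?addr0 // => t tne.
case: eqP => [e1|]; last by rewrite mul0r.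
case: eqP => [e2|]; last by rewrite mulr0.
by move: tne; case: t e1 e2 => a b /= -> ->; rewrite eqxx.
Qed.

Lemma decompE v : decomp_inf p v = (N v)%:E.
Proof.
rewrite /decomp_inf /N -ereal_inf_EFin; [|exact: Dset_lb|exact: Dset_ne].
congr ereal_inf; apply/seteqP; split => x.
  case=> l [z [vs [h1 [h2 ->]]]]; exists (\sum_(i < l) lpnorm p (z i) * mnorm (vs i)) => //.
  by exists l, z, vs.
by case=> r [l [z [vs [h1 [h2 ->]]]]] <-; exists l, z, vs.
Qed.

Lemma N_le v r : Dset v r -> N v <= r.
Proof. by move=> h; apply: ge_inf => //; exact: Dset_lb. Qed.

Lemma N_ge v y : (forall r, Dset v r -> y <= r) -> y <= N v.
Proof. by move=> h; apply: lb_le_inf; [exact: Dset_ne | move=> r; exact: h]. Qed.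

Lemma Dset_add x y r1 r2 : Dset x r1 -> Dset y r2 ->
  Dset (fun j => x j + y j) (r1 + r2).
Proof.
case=> l1 [z1 [vs1 [s1 [e1 ->]]]]; case=> l2 [z2 [vs2 [s2 [e2 ->]]]].
pose z := fun i : 'I_(l1 + l2) => match fintype.split i with inl a => z1 a | inr b => z2 b end.
pose vs := fun i : 'I_(l1 + l2) => match fintype.split i with inl a => vs1 a | inr b => vs2 b end.
have sl : forall a : 'I_l1, fintype.split (lshift l2 a) = inl a by move=> a; exact: (@unsplitK l1 l2 (inl a)).
have sr : forall b : 'I_l2, fintype.split (rshift l1 b) = inr b by move=> b; exact: (@unsplitK l1 l2 (inr b)).
exists (l1 + l2), z, vs; split; last split.
- by move=> i; rewrite /vs; case: (fintype.split i).
- move=> j; rewrite e1 e2 big_split_ord /z /vs.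
  by congr (_ + _); apply: eq_bigr => i _; rewrite ?sl ?sr.
- rewrite big_split_ord /z /vs.
  by congr (_ + _); apply: eq_bigr => i _; rewrite ?sl ?sr.
Qed.

Lemma Nadd x y : N (fun j => x j + y j) <= N x + N y.
Proof.
suff : N (fun j => x j + y j) - N y <= N x by lra.
apply: N_ge => r1 D1.
suff : N (fun j => x j + y j) - r1 <= N y by lra.
apply: N_ge => r2 D2.
have := N_le _ _ (Dset_add _ _ _ _ D1 D2); lra.
Qed.

Lemma Nhom l x : 0 < l -> N (fun j => l *: x j) <= l * N x.
Proof.
move=> l0; have il0 : 0 < l^-1 by rewrite invr_gt0.
suff : l^-1 * N (fun j => l *: x j) <= N x.
  by move=> h; rewrite -(ler_pM2l il0) mulrA mulVf ?gt_eqF // mul1r.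
apply: N_ge => r [l' [z [vs [hs [hx ->]]]]].
have : N (fun j => l *: x j) <= l * \sum_(i < l') lpnorm p (z i) * mnorm (vs i).
  apply: N_le; exists l', (fun i j => l * z i j), vs; split => //; split.
    move=> j; rewrite hx scaler_sumr; apply: eq_bigr => i _; by rewrite scalerA.
  rewrite mulr_sumr; apply: eq_bigr => i _.
  by rewrite lpnormZ // ger0_norm ?ltW // mulrA.
move=> h; rewrite -(ler_pM2l l0) mulrA mulfV ?gt_eqF // mul1r. exact: h.
Qed.

Lemma Nsimple (z : 'I_k -> R) (t : mvec R m d) : simple_mvec t ->
  N (fun j => z j *: t) <= lpnorm p z * mnorm t.
Proof.
move=> st; apply: N_le; exists 1%N, (fun _ => z), (fun _ => t); split => //; split.
  by move=> j; rewrite big_ord1.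
by rewrite big_ord1.
Qed.

Let T : finType := ('I_k * incr m d)%type.
Definition Kv (x : T -> R) : kmvec R k m d := fun j => [ffun I => x (j, I)].
Definition Phi (u : kmvec R k m d) : T -> R := fun t => u t.1 t.2.

Lemma KPhi u : Kv (Phi u) = u.
Proof. by apply: funext => j; apply/ffunP => I; rewrite ffunE. Qed.

Lemma comass_bound (w : kmvec R k m d) (t : mvec R m d) :
  (comass p w <= 1)%E -> simple_mvec t ->
  lpnorm (conj_exp p) (fun j => mpair (w j) t) <= mnorm t.
Proof.
move=> cw st.
have qq := goodp_posp (goodp_conj gp).
have [t0|tn] := eqVneq (mnorm t) 0.
  rewrite (_ : (fun j => mpair (w j) t) = fun _ => 0) ?lpnorm0 ?t0 //.
  by apply: funext => j; rewrite (mnorm_eq0 _ t0) mpair0.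
have tp : 0 < mnorm t by rewrite lt_neqAle eq_sym tn mnorm_ge0.
pose s := (mnorm t)^-1 *: t.
have ss : simple_mvec s by apply: simpleZ.
have ns : mnorm s = 1 by rewrite mnormZ ger0_norm ?invr_ge0 ?mnorm_ge0 // mulVf.
have : ((lpnorm (conj_exp p) (fun j => mpair (w j) s))%:E <= 1)%E.
  apply: le_trans cw; apply: ereal_sup_ubound; exists s => //; split => //.
  by rewrite ns.
rewrite lee_fin (_ : (fun j => _) = (fun j => (mnorm t)^-1 * mpair (w j) t)); last first.
  by apply: funext => j; rewrite mpairZ.
rewrite lpnormZ // ger0_norm ?invr_ge0 ?mnorm_ge0 // => h.
by rewrite -(ler_pM2l (ltac:(by rewrite invr_gt0) : 0 < (mnorm t)^-1)) mulVf // ?gt_eqF.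
Qed.

Theorem main_eq (v : kmvec R k m d) : mass p v = decomp_inf p v.
Proof.
rewrite decompE; apply/le_anti/andP; split.
  apply: ge_ereal_sup => _ [w cw <-]; rewrite lee_fin; apply: N_ge.
  move=> r [l [z [vs [hs [hv ->]]]]].
  rewrite /kpair (eq_bigr (fun j => \sum_(i < l) z i j * mpair (w j) (vs i))); last first.
    by move=> j _; rewrite hv mpair_sum.
  rewrite exchange_big /=; apply: ler_sum => i _.
  apply: le_trans (holder _ _ gp) _.
  apply: ler_wpM2l; first exact: lpnorm_ge0.
  exact: comass_bound.
pose pN x := N (Kv x).
have padd : forall x y, pN (fun t => x t + y t) <= pN x + pN y.
  move=> x y; rewrite /pN (_ : Kv _ = (fun j => Kv x j + Kv y j)); first exact: Nadd.
  by apply: funext => j; apply/ffunP => I; rewrite !ffunE.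
have phom : forall l x, 0 < l -> pN (fun t => l * x t) <= l * pN x.
  move=> l x l0; rewrite /pN (_ : Kv _ = (fun j => l *: Kv x j)); first exact: Nhom.
  by apply: funext => j; apply/ffunP => I; rewrite !ffunE.
have [a [Ha Hv]] := hahn_banach pN padd phom (Phi v).
pose w : kmvec R k m d := fun j => [ffun I => a (j, I)].
have kpE : forall u, kpair w u = Fl a (Phi u).
  move=> u; rewrite /kpair /mpair /Fl (pair_bigA _ (fun i I => w i I * u i I)).
  by apply: eq_bigr => -[j I] _; rewrite /w ffunE.
have cw : (comass p w <= 1)%E.
  apply: ge_ereal_sup => _ [t [st nt] <-]; rewrite lee_fin; apply: dual_attain gp _ => z.
  have -> : \sum_i z i * mpair (w i) t = kpair w (fun j => z j *: t).
    by apply: eq_bigr => j _; rewrite mpairZ.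
  rewrite kpE; apply: le_trans (Ha _) _; rewrite /pN KPhi.
  apply: le_trans (Nsimple z t st) _.
  rewrite -[X in _ <= X]mulr1; apply: ler_wpM2l => //; exact: lpnorm_ge0.
have <- : kpair w v = N v by rewrite kpE Hv /pN KPhi.
by apply: ereal_sup_ubound; exists w.
Qed.

End Main.

Theorem lemmaA2 (R : realType) (k m d : nat) (p : \bar R)
  (hk : (1 <= k)%N) (hm : (1 <= m)%N) (hmd : (m <= d)%N)
  (hp : (1%:E <= p)%E) (v : kmvec R k m d) :
  mass p v = decomp_inf p v.
Proof.
exact: (@main_eq R k m d p hm hp v).
Qed.
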